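(* Let $x^*\in\mathbb{R}^n$ satisfy $Ax^*=b$, let $\ell\ge1$ and let $x_1,\ldots,x_\ell\in\mathbb{R}^n$ be affinely independent points such that \[x_\ell=\operatorname{argmin}_{\xi\in\operatorname{aff}(x_1,\ldots,x_\ell)}\|\xi-x^*\|^2\] and $P(x_\ell)\notin\operatorname{aff}(x_1,\ldots,x_\ell)$. Let \[V=(x_1-x_\ell,\ldots,x_{\ell-1}-x_\ell)\in\mathbb{R}^{n\times(\ell-1)},\quad M=(V,\,P(x_\ell)-x_\ell)\in\mathbb{R}^{n\times\ell},\quad \gamma=\tfrac12\big(\|r(x_\ell)\|^2+\|P(x_\ell)-x_\ell\|^2\big).\] Then the minimizer $s^*=\operatorname{argmin}_{s\in\mathbb{R}^\ell}\|x_\ell+Ms-x^*\|^2$ exists, is unique, and is the unique solution of the linear system $M^TMs=\gamma e_\ell$, where $e_\ell\in\mathbb{R}^\ell$ is the $\ell$-th unit vector. Moreover, \[\|x_\ell-x^*\|^2-\|x_\ell+Ms^*-x^*\|^2=\gamma s^*_\ell=\gamma^2\frac{\det(V^TV)}{\det(M^TM)}.\]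
   Context: Let $A=(a_1,\ldots,a_m)^T\in\mathbb{R}^{m\times n}$ with rows $a_j\in\mathbb{R}^n\setminus\{0\}$, and let $b\in\mathbb{R}^m$ lie in the range of $A$. Norms are Euclidean. For $j=1,\ldots,m$ define the projectors $P_j:\mathbb{R}^n\to\mathbb{R}^n$, $P_j(x)=\big(I-\frac{a_ja_j^T}{\|a_j\|^2}\big)x+\frac{b_j}{\|a_j\|^2}a_j$ (the orthogonal projection onto $\{z:a_j^Tz=b_j\}$), and the Kaczmarz cycle $P=P_m\circ\cdots\circ P_1$. The residual $r:\mathbb{R}^n\to\mathbb{R}^m$ is defined by $r_1(x)=(a_1^Tx-b_1)/\|a_1\|$ and $r_j(x)=(a_j^T(P_{j-1}\circ\cdots\circ P_1)(x)-b_j)/\|a_j\|$ for $j=2,\ldots,m$. $\operatorname{aff}(\cdot)$ denotes the affine hull. When $\ell=1$, $V$ is the empty matrix and $\det(V^TV)$ is taken to be $1$. *)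

(* Defs.v *)
From HB Require Import structures.
From mathcomp Require Import all_boot all_order all_algebra.
Set Implicit Arguments. Unset Strict Implicit. Unset Printing Implicit Defensive.
Import Order.TTheory GRing.Theory Num.Theory.
Local Open Scope ring_scope.

Section KaczmarzDefs.
Variables (R : rcfType) (m n : nat) (A : 'M[R]_(m, n)) (b : 'cV[R]_m).

Definition sqnorm p (u : 'cV[R]_p) : R := \sum_(i < p) u i 0 ^+ 2.

Definition rowsq (j : 'I_m) : R := \sum_(i < n) A j i ^+ 2.

Definition kacz_proj (j : 'I_m) (x : 'cV[R]_n) : 'cV[R]_n :=
  x - (((row j A *m x) 0 0 - b j 0) / rowsq j) *: (row j A)^T.

(* kacz_partial k = P_k o ... o P_1  (1-indexed), i.e. the first k projections *)
Fixpoint kacz_partial (k : nat) (x : 'cV[R]_n) : 'cV[R]_n :=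
  match k with
  | 0 => x
  | k'.+1 =>
      match (insub k' : option 'I_m) with
      | Some j => kacz_proj j (kacz_partial k' x)
      | None => kacz_partial k' x
      end
  end.

Definition kacz_cycle (x : 'cV[R]_n) : 'cV[R]_n := kacz_partial m x.

Definition kacz_residual (x : 'cV[R]_n) : 'cV[R]_m :=
  \col_(j < m) (((row j A *m kacz_partial j x) 0 0 - b j 0) / Num.sqrt (rowsq j)).

End KaczmarzDefs.

Definition aff_hull (R : rcfType) (n l : nat) (x : 'I_l -> 'cV[R]_n) (z : 'cV[R]_n) : Prop :=
  exists c : 'I_l -> R, \sum_(i < l) c i = 1 /\ z = \sum_(i < l) c i *: x i.

Definition aff_indep (R : rcfType) (n l : nat) (x : 'I_l -> 'cV[R]_n) : Prop :=
  forall c : 'I_l -> R, \sum_(i < l) c i = 0 -> \sum_(i < l) c i *: x i = 0 ->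
    forall i, c i = 0.

Definition is_argmin (T : Type) (R : rcfType) (S : T -> Prop) (f : T -> R) (z : T) : Prop :=
  S z /\ forall y, S y -> f z <= f y.

(* Main.v *)
Require Import Defs.
From HB Require Import structures.
From mathcomp Require Import all_boot all_order all_algebra.
From mathcomp Require Import ring lra.
Import Order.TTheory GRing.Theory Num.Theory.
Local Open Scope ring_scope.
Set Implicit Arguments. Unset Strict Implicit. Unset Printing Implicit Defensive.


Section Aux.
Variable R : rcfType.

Definition dot p (u v : 'cV[R]_p) : R := \sum_(i < p) u i 0 * v i 0.

Lemma sqnormE p (u : 'cV[R]_p) : sqnorm u = dot u u.
Proof. by apply: eq_bigr => i _; rewrite expr2. Qed.

Lemma dotC p (u v : 'cV[R]_p) : dot u v = dot v u.
Proof. by apply: eq_bigr => i _; rewrite mulrC. Qed.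

Lemma dotDl p (u v w : 'cV[R]_p) : dot (u + v) w = dot u w + dot v w.
Proof. by rewrite /dot -big_split; apply: eq_bigr => i _; rewrite mxE mulrDl. Qed.

Lemma dotNl p (u w : 'cV[R]_p) : dot (- u) w = - dot u w.
Proof. by rewrite /dot -sumrN; apply: eq_bigr => i _; rewrite mxE mulNr. Qed.

Lemma dotZl p a (u w : 'cV[R]_p) : dot (a *: u) w = a * dot u w.
Proof. by rewrite /dot mulr_sumr; apply: eq_bigr => i _; rewrite mxE mulrA. Qed.

Lemma dotBl p (u v w : 'cV[R]_p) : dot (u - v) w = dot u w - dot v w.
Proof. by rewrite dotDl dotNl. Qed.
Lemma dotDr p (u v w : 'cV[R]_p) : dot w (u + v) = dot w u + dot w v.
Proof. by rewrite !(dotC w) dotDl. Qed.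
Lemma dotNr p (u w : 'cV[R]_p) : dot w (- u) = - dot w u.
Proof. by rewrite !(dotC w) dotNl. Qed.
Lemma dotZr p a (u w : 'cV[R]_p) : dot w (a *: u) = a * dot w u.
Proof. by rewrite !(dotC w) dotZl. Qed.
Lemma dotBr p (u v w : 'cV[R]_p) : dot w (u - v) = dot w u - dot w v.
Proof. by rewrite dotDr dotNr. Qed.
Lemma dot0l p (w : 'cV[R]_p) : dot 0 w = 0.
Proof. by rewrite /dot big1 // => i _; rewrite mxE mul0r. Qed.
Lemma dot0r p (w : 'cV[R]_p) : dot w 0 = 0.
Proof. by rewrite dotC dot0l. Qed.

Lemma dot_mulmx p q (M : 'M[R]_(p,q)) s v : dot (M *m s) v = dot s (M^T *m v).
Proof.
rewrite /dot.
under eq_bigr do rewrite mxE mulr_suml.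
rewrite exchange_big /=; apply: eq_bigr => j _.
rewrite mxE mulr_sumr; apply: eq_bigr => i _; rewrite mxE; ring.
Qed.

Lemma sqnorm_ge0 p (u : 'cV[R]_p) : 0 <= sqnorm u.
Proof. by apply: sumr_ge0 => i _; rewrite sqr_ge0. Qed.

Lemma sqnorm_eq0 p (u : 'cV[R]_p) : sqnorm u = 0 -> u = 0.
Proof.
move=> H; apply/matrixP => i j; rewrite (ord1 j) [RHS]mxE.
have Hz := psumr_eq0P (P := predT) (F := fun k => u k 0 ^+ 2)
   (fun k _ => sqr_ge0 (u k 0)) H.
by apply/eqP; rewrite -sqrf_eq0; apply/eqP; apply: Hz.
Qed.

Lemma sqnormD p (u v : 'cV[R]_p) :
  sqnorm (u + v) = sqnorm u + 2 * dot u v + sqnorm v.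
Proof. rewrite !sqnormE !dotDl !dotDr (dotC v u); ring. Qed.

Lemma sqnormB p (u v : 'cV[R]_p) :
  sqnorm (u - v) = sqnorm u - 2 * dot u v + sqnorm v.
Proof. rewrite sqnormD dotNr (sqnormE (- v)) dotNl dotNr opprK -sqnormE; ring. Qed.

Lemma kacz_step (m n : nat) (A : 'M[R]_(m,n)) b xs (j : 'I_m) y :
  A *m xs = b ->
  sqnorm (y - xs) - sqnorm (kacz_proj A b j y - xs) =
  ((row j A *m y) 0 0 - b j 0) ^+ 2 / rowsq A j.
Proof.
move=> Hb; rewrite /kacz_proj.
set a := (row j A)^T.
set d := (row j A *m y) 0 0 - b j 0.
set q := rowsq A j.
have E : forall z, dot z a = (row j A *m z) 0 0.
  by move=> z; rewrite /dot mxE; apply: eq_bigr => i _; rewrite !mxE mulrC.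
have Hda : dot (y - xs) a = d.
  by rewrite /d dotBl !E -[row j A *m xs]row_mul Hb !mxE.
have Ha : sqnorm a = q.
  by rewrite /q /rowsq; apply: eq_bigr => i _; rewrite !mxE.
rewrite [y - _ - xs]addrAC.
rewrite [sqnorm (_ - _ *: a)]sqnormB dotZr Hda (sqnormE (_ *: a)) dotZl dotZr -sqnormE Ha.
have [->|q0] := eqVneq q 0; first by rewrite !invr0 !mulr0; ring.
by field.
Qed.


Lemma kacz_tele (m n : nat) (A : 'M[R]_(m,n)) b xs x :
  A *m xs = b ->
  sqnorm (x - xs) - sqnorm (kacz_cycle A b x - xs) = sqnorm (kacz_residual A b x).
Proof.
move=> Hb.
pose g i := match (insub i : option 'I_m) with
  | Some jj => ((row jj A *m kacz_partial A b i x) 0 0 - b jj 0) ^+ 2 / rowsq A jj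
  | None => 0 end.
have H : forall j, sqnorm (x - xs) - sqnorm (kacz_partial A b j x - xs) = \sum_(i < j) g i.
  elim => [|j IH]; first by rewrite big_ord0 /= subrr.
  rewrite big_ord_recr /= -IH.
  have -> : g j = sqnorm (kacz_partial A b j x - xs) - sqnorm (kacz_partial A b j.+1 x - xs).
    rewrite /g /=; case: insub => [jj|]; first by rewrite kacz_step.
    by rewrite subrr.
  ring.
rewrite /kacz_cycle H /kacz_residual /sqnorm; apply: eq_bigr => i _.
rewrite mxE /g valK exprMn exprVn sqr_sqrtr //.
by apply: sumr_ge0 => k _; rewrite sqr_ge0.
Qed.


Lemma sumr_delta p (i : 'I_p) (F : 'I_p -> R) : \sum_j (j == i)%:R * F j = F i.
Proof. by rewrite (bigD1 i) //= eqxx mul1r big1 ?addr0 // => j /negbTE ->; rewrite mul0r. Qed.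

Lemma sumv_delta p q (i : 'I_p) (F : 'I_p -> 'cV[R]_q) : \sum_j (j == i)%:R *: F j = F i.
Proof. by rewrite (bigD1 i) //= eqxx scale1r big1 ?addr0 // => j /negbTE ->; rewrite scale0r. Qed.

Lemma sum_lin n k (x : 'I_k.+1 -> 'cV[R]_n) (d : 'I_k.+1 -> R) :
  \sum_j d j *: (x j - x ord_max) = \sum_j d j *: x j - (\sum_j d j) *: x ord_max.
Proof. by under eq_bigr do rewrite scalerBr; rewrite sumrB scaler_suml. Qed.

Lemma aff_lin n k (x : 'I_k.+1 -> 'cV[R]_n) (d : 'I_k.+1 -> R) :
  aff_hull x (x ord_max + \sum_j d j *: (x j - x ord_max)).
Proof.
exists (fun j => d j + (j == ord_max)%:R * (1 - \sum_j d j)); split.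
  by rewrite big_split /= sumr_delta addrC subrK.
rewrite sum_lin.
under [RHS]eq_bigr do rewrite scalerDl mulrC -scalerA.
rewrite big_split /= -scaler_sumr sumv_delta.
rewrite scalerBl scale1r.
by rewrite addrCA.
Qed.


Lemma quad_zero (c q t : R) : 0 <= q -> t = - c / (q + 1) ->
  0 <= 2 * (t * c) + t * (t * q) -> c = 0.
Proof.
move=> q0 -> H.
have q1 : q + 1 != 0 by apply/eqP => H1; lra.
have e1 : (q+1)^+2 * (2 * (- c / (q + 1) * c) + - c / (q + 1) * (- c / (q + 1) * q))
   = - (c^+2 * (q+2)) by field.
have : 0 <= (q+1)^+2 * (2 * (- c / (q + 1) * c) + - c / (q + 1) * (- c / (q + 1) * q)).
  by apply: mulr_ge0 => //; apply: sqr_ge0.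
rewrite e1 => H2.
nra.
Qed.


Lemma lin_gam (a b d s : R) : a - (b + 2 * d + a) = s -> d = - ((s + b) / 2).
Proof. move=> H; lra. Qed.

Lemma dot_delta p (s : 'cV[R]_p.+1) : dot s (delta_mx ord_max 0) = s ord_max 0.
Proof.
rewrite /dot (bigD1 ord_max) //= big1 ?addr0; first by rewrite mxE !eqxx mulr1.
by move=> j /negbTE hj; rewrite mxE hj mulr0.
Qed.

End Aux.

Theorem theorem7 (R : rcfType) (m n k : nat) (A : 'M[R]_(m, n)) (b : 'cV[R]_m)
    (xstar : 'cV[R]_n) (x : 'I_k.+1 -> 'cV[R]_n) :
  (forall j : 'I_m, row j A != 0) ->
  (exists y : 'cV[R]_n, A *m y = b) ->
  A *m xstar = b ->
  aff_indep x ->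
  is_argmin (aff_hull x) (fun xi => sqnorm (xi - xstar)) (x ord_max) ->
  ~ aff_hull x (kacz_cycle A b (x ord_max)) ->
  let xl := x ord_max in
  let V : 'M[R]_(n, k) :=
    \matrix_(i < n, j < k) (x (widen_ord (leqnSn k) j) - xl) i 0 in
  let M : 'M[R]_(n, k.+1) :=
    \matrix_(i < n, j < k.+1)
      (if j == ord_max then (kacz_cycle A b xl - xl) i 0 else (x j - xl) i 0) in
  let gamma : R :=
    (sqnorm (kacz_residual A b xl) + sqnorm (kacz_cycle A b xl - xl)) / 2 in
  let e : 'cV[R]_k.+1 := delta_mx ord_max 0 in
  let f := fun s : 'cV[R]_k.+1 => sqnorm (xl + M *m s - xstar) in
  exists sstar : 'cV[R]_k.+1,
    [/\ is_argmin (fun _ => True) f sstar,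
        (forall s, is_argmin (fun _ => True) f s -> s = sstar),
        M^T *m M *m sstar = gamma *: e,
        (forall s, M^T *m M *m s = gamma *: e -> s = sstar) &
        (sqnorm (xl - xstar) - f sstar = gamma * sstar ord_max 0 /\
         gamma * sstar ord_max 0 = gamma ^+ 2 * (\det (V^T *m V) / \det (M^T *m M)))].
Proof.
move=> _ _ Hxs Hind [Hin Hmin] HP xl V M gamma e f.
set P := kacz_cycle A b xl.
set w := xl - xstar.
set u := P - xl.
have Horth : forall i, dot (x i - xl) w = 0.
  move=> i.
  set d0 := x i - xl.
  set c := dot d0 w.
  set q := sqnorm d0.
  have q0 : 0 <= q by apply: sqnorm_ge0.
  set t := - c / (q + 1).
  have Haff := aff_lin x (fun j => (j == i)%:R * t).
  have := Hmin _ Haff.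
  have -> : \sum_j ((j == i)%:R * t) *: (x j - x ord_max) = t *: d0.
    under eq_bigr do rewrite mulrC -scalerA.
    by rewrite -scaler_sumr sumv_delta.
  have -> : x ord_max + t *: d0 - xstar = w + t *: d0 by rewrite addrAC.
  rewrite [sqnorm (w + _)]sqnormD dotZr (dotC w) -/c (sqnormE (t *: d0)) dotZl dotZr -sqnormE -/q.
  rewrite -/xl -/w -addrA lerDl => Hle.
  exact: (quad_zero q0 (erefl t)).
have Hgam : dot u w = - gamma.
  have Ht := kacz_tele xl Hxs.
  have E1 : kacz_cycle A b xl - xstar = u + w by rewrite /u /w addrA subrK.
  rewrite E1 sqnormD in Ht.
  rewrite /gamma -/P -/u; exact: (lin_gam Ht).
have HMw : M^T *m w = - gamma *: e.
  apply/matrixP => j z; rewrite (ord1 z).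
  have -> : (M^T *m w) j 0 = dot (if j == ord_max then u else x j - xl) w.
    rewrite mxE /dot; apply: eq_bigr => i _; by rewrite !mxE; case: ifP => _; rewrite /u /P !mxE.
  rewrite !mxE eqxx andbT.
  case: eqVneq => [_|hj]; first by rewrite Hgam mulr1.
  by rewrite Horth mulr0.
have HMs : forall s, M *m s = s ord_max 0 *: u + \sum_j s j 0 *: (x j - xl).
  move=> s; apply/matrixP => i z; rewrite (ord1 z) !mxE summxE.
  rewrite (bigD1 ord_max) //= [X in _ = _ + X](bigD1 ord_max) //=.
  rewrite !mxE eqxx subrr mulr0 add0r mulrC; congr (_ + _).
  by apply: eq_bigr => j hj; rewrite !mxE (negbTE hj) mulrC.
have Minj : forall s : 'cV[R]_k.+1, M *m s = 0 -> s = 0.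
  move=> s H00.
  have H0 : s ord_max 0 *: u + \sum_j s j 0 *: (x j - xl) = 0 by rewrite -HMs.
  have Hl : s ord_max 0 = 0.
    apply/eqP; apply/negPn/negP => hl; apply: HP.
    have -> : kacz_cycle A b (x ord_max) = xl + \sum_j (- s j 0 / s ord_max 0) *: (x j - xl).
      have HS : \sum_j s j 0 *: (x j - xl) = - (s ord_max 0 *: u).
        by apply/eqP; rewrite -addr_eq0 addrC H0.
      under eq_bigr do rewrite mulrC -scalerA.
      rewrite -scaler_sumr.
      under eq_bigr do rewrite scaleNr.
      by rewrite sumrN HS opprK scalerA mulVf // scale1r /u /P addrC subrK.
    exact: aff_lin.
  rewrite Hl scale0r add0r in H0.
  have Hc := Hind (fun j => s j 0 - (j == ord_max)%:R * \sum_i s i 0).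
  have Hsum : \sum_j (s j 0 - (j == ord_max)%:R * \sum_i s i 0) = 0.
    by rewrite sumrB sumr_delta subrr.
  have Hvec : \sum_j (s j 0 - (j == ord_max)%:R * \sum_i s i 0) *: x j = 0.
    under eq_bigr do rewrite scalerBl.
    rewrite sumrB.
    under [X in _ - X]eq_bigr do rewrite mulrC -scalerA.
    by rewrite -scaler_sumr sumv_delta -sum_lin.
  apply/matrixP => j z; rewrite (ord1 z) [RHS]mxE.
  case: (eqVneq j ord_max) => [->|hj] //.
  by move: (Hc Hsum Hvec j); rewrite (negbTE hj) mul0r subr0.
have HB : M^T *m M \in unitmx.
  rewrite unitmxE unitfE; apply/negP => /det0P [v vn0 vB].
  have HM : M *m v^T = 0.
    apply: sqnorm_eq0; rewrite sqnormE dot_mulmx mulmxA.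
    move: (congr1 trmx vB); rewrite trmx0 !trmx_mul trmxK => ->.
    by rewrite dot0r.
  by move/negP: vn0; apply; apply/eqP; rewrite -[v]trmxK (Minj _ HM) trmx0.
set B := M^T *m M.
pose ss := invmx B *m (gamma *: e).
have HBs : B *m ss = gamma *: e by rewrite /ss mulKVmx.
have Hf : forall s : 'cV[R]_k.+1, f s = sqnorm (w + M *m s) by move=> s; rewrite /f addrAC.
have Hkey : forall s : 'cV[R]_k.+1, f s = f ss + sqnorm (M *m (s - ss)).
  move=> s; rewrite !Hf.
  have -> : w + M *m s = (w + M *m ss) + M *m (s - ss).
    by rewrite mulmxBr (addrC (M *m s)) addrA addrK.
  rewrite sqnormD (dotC (w + _)) dot_mulmx mulmxDr mulmxA -/B HMw HBs.
  by rewrite scaleNr addNr dot0r mulr0 addr0.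
exists ss; split.
- by split => // y _; rewrite (Hkey y) lerDl sqnorm_ge0.
- move=> s [_ Hs]; have := Hs ss I; rewrite (Hkey s) gerDl => H.
  have : sqnorm (M *m (s - ss)) = 0 by apply/le_anti; rewrite H sqnorm_ge0.
  by move/sqnorm_eq0/Minj/subr0_eq.
- exact: HBs.
- by move=> s Hs; rewrite /ss -Hs mulKmx.
split.
  rewrite Hf sqnormD (dotC w) dot_mulmx HMw dotZr dot_delta (sqnormE (M *m ss)).
  rewrite dot_mulmx mulmxA -/B HBs dotZr dot_delta.
  ring.
have Hsl : ss ord_max 0 = gamma * invmx B ord_max ord_max.
  by rewrite /ss -scalemxAr /e -colE !mxE.
have Hlw : forall i : 'I_k, lift ord_max i = widen_ord (leqnSn k) i.
  by move=> i; apply: val_inj; exact: lift_max.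
have Hinv : invmx B ord_max ord_max = (\det B)^-1 * \det (V^T *m V).
  rewrite /invmx HB !mxE /cofactor.
  have -> : row' ord_max (col' ord_max B) = V^T *m V.
    apply/matrixP => i j; rewrite !mxE; apply: eq_bigr => r _.
    have Hn : forall i0 : 'I_k, (lift ord_max i0 == ord_max) = false.
      by move=> i0; apply/negbTE; rewrite eq_sym neq_lift.
    by rewrite !mxE !Hn !Hlw.
  by rewrite -signr_odd addnn odd_double expr0 mul1r.
rewrite Hsl Hinv; ring.
Qed.
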